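(* Let $G$ be a connected simple graph on $n\ge2$ vertices labeled so that $m_1\ge m_2\ge\cdots\ge m_n$, where $m_i=\frac{\sum_{j\sim i}d_j}{d_i}$. Let $N=\max_{i\sim j}d_j/d_i$. Then for $1\le i\le n$, \[\rho(A(G))\le \frac{m_i-N+\sqrt{(m_i+N)^2+4N\sum_{k=1}^{i-1}(m_k-m_i)}}{2},\] and equality holds if and only if $m_1=m_2=\cdots=m_n$ (i.e., $G$ is pseudo-regular).
   Context: $A(G)$ is the adjacency matrix of $G$, $d_i$ the degree of vertex $v_i$, $i\sim j$ means $v_i$ and $v_j$ are adjacent, $m_i$ is the average degree of $v_i$, and $\rho$ is the spectral radius. A graph is pseudo-regular if all $m_i$ are equal. An empty sum equals $0$. *)

(* Defs.v *)
From HB Require Import structures.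
From mathcomp Require Import all_boot all_order all_algebra all_field.
Set Implicit Arguments. Unset Strict Implicit. Unset Printing Implicit Defensive.
Import Order.TTheory GRing.Theory Num.Theory.
Local Open Scope ring_scope.

Definition simple_graph n (e : rel 'I_n) : Prop :=
  symmetric e /\ irreflexive e.

Definition connected_graph n (e : rel 'I_n) : Prop :=
  forall i j : 'I_n, connect e i j.

Definition deg n (e : rel 'I_n) (i : 'I_n) : nat := #|[set j | e i j]|.

Definition avgdeg n (e : rel 'I_n) (i : 'I_n) : algC :=
  (\sum_(j | e i j) (deg e j)%:R) / (deg e i)%:R.

(* N = max_{i ~ j} d_j / d_i  (all values are positive, 0 is a neutral start) *)
Definition maxratio n (e : rel 'I_n) : algC :=
  \big[Num.max/0]_(p : 'I_n * 'I_n | e p.1 p.2) ((deg e p.2)%:R / (deg e p.1)%:R).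

Definition adjmx n (e : rel 'I_n) : 'M[algC]_n := \matrix_(i, j) (e i j)%:R.

Definition spectrum n (A : 'M[algC]_n) : seq algC :=
  projT1 (closed_field_poly_normal (char_poly A)).

Definition spectral_radius n (A : 'M[algC]_n) : algC :=
  \big[Num.max/0]_(l <- spectrum A) `|l|.

Definition pseudo_regular n (e : rel 'I_n) : Prop :=
  forall i j : 'I_n, avgdeg e i = avgdeg e j.

(* Main.v *)
Require Import Defs.
From mathcomp Require Import all_boot all_order all_algebra all_field.
Import Order.TTheory GRing.Theory Num.Theory.
Local Open Scope ring_scope.
Lemma adj_entry n (e : rel 'I_n) (v : 'rV[algC]_n) k : symmetric e ->
  (v *m adjmx e) 0 k = \sum_(j | e k j) v 0 j.
Proof.
move=> se; rewrite !mxE (bigID (fun j => e k j)) /= addrC big1 ?add0r.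
  by apply: eq_bigr => j ekj; rewrite mxE se ekj mulr1.
by move=> j /negbTE ekj; rewrite mxE se ekj mulr0.
Qed.
Lemma maxC_cases {x y : algC} : x \is Num.real -> y \is Num.real ->
  (Num.max x y = x /\ y <= x) \/ (Num.max x y = y /\ x <= y).
Proof.
move=> xr yr.
have mE : Num.max x y = if x < y then y else x by [].
rewrite mE; case: ifP => xy.
  by right; split => //; exact: ltW.
left; split => //.
by case/orP: (real_leVge xr yr) => // h; rewrite le_eqVlt xy orbF in h; rewrite (eqP h).
Qed.

Lemma bigmaxC (I : eqType) (s : seq I) (P : pred I) (f : I -> algC) :
  (forall x, P x -> 0 <= f x) ->
  [/\ 0 <= \big[Num.max/0]_(x <- s | P x) f x,
   (forall x, x \in s -> P x -> f x <= \big[Num.max/0]_(x <- s | P x) f x) &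
   (\big[Num.max/0]_(x <- s | P x) f x = 0 \/
    exists2 x, x \in s & P x /\ f x = \big[Num.max/0]_(x <- s | P x) f x)].
Proof.
move=> f0; elim: s => [|a s [IH1 IH2 IH3]].
  by rewrite big_nil; split => //; left.
rewrite big_cons; set M := \big[_/_]_(x <- s | P x) f x in IH1 IH2 IH3 *.
case: ifP => Pa; last first.
  split => //; last by case: IH3 => [->|[x xs [Px fx]]]; [left|right; exists x; rewrite ?inE ?xs ?orbT].
  by move=> x; rewrite inE => /orP [/eqP -> | xs Px]; [rewrite Pa | exact: IH2].
have fa := f0 a Pa.
case: (maxC_cases (ger0_real fa) (ger0_real IH1)) => [[-> Ma]|[-> aM]].
- split => //; last by right; exists a; rewrite ?inE ?eqxx.
  move=> x; rewrite inE => /orP [/eqP -> //| xs Px].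
  exact: le_trans (IH2 x xs Px) Ma.
- split => //.
  + move=> x; rewrite inE => /orP [/eqP -> //| xs Px]; exact: IH2.
  + by case: IH3 => [->|[x xs [Px fx]]]; [left|right; exists x; rewrite ?inE ?xs ?orbT].
Qed.

Lemma eig_weight n (e : rel 'I_n) (w : 'I_n -> algC) (l0 lam : algC) (v : 'rV[algC]_n) :
  symmetric e -> (forall k, 0 < w k) ->
  (forall k, \sum_(j | e k j) w j <= l0 * w k) ->
  v *m adjmx e = lam *: v -> v != 0 ->
  `|lam| <= l0 /\
  (`|lam| = l0 -> connected_graph e -> forall k, \sum_(j | e k j) w j = l0 * w k).
Proof.
move=> se wpos rowb ev vnz.
pose z j := v 0 j / w j.
have vE j : `|v 0 j| = w j * `|z j|.
  by rewrite normrM normfV (gtr0_norm (wpos j)) mulrC divfK // gt_eqF.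
have [M0 Mge Mex] := bigmaxC _ (enum 'I_n) predT (fun j => `|z j|) (fun j _ => normr_ge0 _).
set M := \big[_/_]_(j <- _ | _) _ in M0 Mge Mex.
have Mge' j : `|z j| <= M by apply: Mge; rewrite ?mem_enum.
have Mpos : 0 < M.
  rewrite lt_def M0 andbT; apply/eqP => M0'.
  move/negP: vnz; apply; apply/eqP/rowP => j; rewrite !mxE.
  have : `|z j| <= 0 by rewrite -M0'.
  rewrite normr_le0 /z mulf_eq0 invr_eq0 (gt_eqF (wpos j)) orbF.
  by move/eqP.
have [k0 zk0] : exists k, `|z k| = M.
  by case: Mex => [M0'|[k _ [_ <-]]]; [move: Mpos; rewrite M0' ltxx | exists k].
have key k : `|z k| = M ->
   `|lam| * (w k * M) <= \sum_(j | e k j) w j * `|z j| /\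
   \sum_(j | e k j) w j * `|z j| <= \sum_(j | e k j) w j * M /\
   \sum_(j | e k j) w j * M <= l0 * (w k * M).
  move=> zk; split; last split.
  - have h := congr1 (fun u : 'rV[algC]_n => u 0 k) ev.
    rewrite /= adj_entry // mxE in h.
    rewrite -zk -vE -normrM -h (le_trans (ler_norm_sum _ _ _)) //.
    by apply: ler_sum => j _; rewrite vE.
  - by apply: ler_sum => j _; apply: ler_wpM2l; [exact: ltW | exact: Mge'].
  - rewrite -mulr_suml mulrA; apply: ler_wpM2r; [exact: ltW | exact: rowb].
have wMpos k : 0 < w k * M by rewrite mulr_gt0.
split.
  have [h1 [h2 h3]] := key k0 zk0.
  by rewrite -(ler_pM2r (wMpos k0)) (le_trans h1 (le_trans h2 h3)).
move=> lamE conn.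
have tight k : `|z k| = M ->
   (forall j, e k j -> `|z j| = M) /\ \sum_(j | e k j) w j = l0 * w k.
  move=> zk; have [h1 [h2 h3]] := key k zk; rewrite lamE in h1.
  have e23 : \sum_(j | e k j) w j * M = l0 * (w k * M).
    by apply/le_anti; rewrite h3 (le_trans h1 h2).
  have e12 : \sum_(j | e k j) w j * `|z j| = \sum_(j | e k j) w j * M.
    by apply/le_anti; rewrite h2 e23 h1.
  split; last first.
    have := mulIf (negbT (gt_eqF Mpos)); apply; rewrite /= mulr_suml e23; exact: mulrA.
  move=> j ekj.
  have : \sum_(j | e k j) (w j * M - w j * `|z j|) = 0 by rewrite sumrB e12 subrr.
  move=> hz.
  have nn : forall i, e k i -> 0 <= w i * M - w i * `|z i|.
    by move=> i _; rewrite subr_ge0; apply: ler_wpM2l; [exact: ltW | exact: Mge'].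
  have := psumr_eq0P nn hz ekj.
  move/eqP; rewrite -mulrBr mulf_eq0 (gt_eqF (wpos j)) /= subr_eq0.
  by move/eqP.
have cl : closed e (fun j => `|z j| == M).
  move=> x y exy; apply/eqP/eqP => h.
    by have [t _] := tight x h; exact: t.
  by have [t _] := tight y h; apply: t; rewrite se.
move=> k; have := closed_connect cl (conn k0 k).
rewrite !unfold_in /= zk0 eqxx => /esym/eqP zk.
by have [_ ->] := tight k zk.
Qed.

Lemma spec_eig n (A : 'M[algC]_n) l : l \in spectrum A ->
  exists2 v : 'rV_n, v *m A = l *: v & v != 0.
Proof.
rewrite /spectrum; case: closed_field_poly_normal => r /= hr lr.
apply/eigenvalueP; rewrite eigenvalue_root_char hr.
by rewrite (monicP (char_poly_monic A)) scale1r root_prod_XsubC.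
Qed.

Lemma eig_spec n (A : 'M[algC]_n) l (v : 'rV_n) : v *m A = l *: v -> v != 0 ->
  l \in spectrum A.
Proof.
move=> ev vnz.
have : eigenvalue A l by apply/eigenvalueP; exists v.
rewrite /spectrum; case: closed_field_poly_normal => r /= hr.
by rewrite eigenvalue_root_char hr (monicP (char_poly_monic A)) scale1r root_prod_XsubC.
Qed.

Lemma deg_pos n (e : rel 'I_n) : (2 <= n)%N -> connected_graph e ->
  forall k, (0 < deg e k)%N.
Proof.
move=> n2 conn k.
have [j kj] : exists j : 'I_n, k != j.
  clear -n2; case: n n2 k => [|[|n']] // _ k.
  case: (k =P ord0) => [->|/eqP h]; last by exists ord0.
  by exists ord_max.
have /connectP [p pth lst] := conn k j.
case: p pth lst => [|x p] /=; first by move=> _ h; rewrite h eqxx in kj.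
case/andP => ekx _ _; rewrite /deg card_gt0; apply/set0Pn; exists x.
by rewrite inE.
Qed.

Lemma sum_nbr_const n (e : rel 'I_n) k (c : algC) :
  \sum_(j | e k j) c = c * (deg e k)%:R.
Proof.
rewrite (eq_bigl (fun j => j \in [set j | e k j])); last by move=> j; rewrite inE.
by rewrite sumr_const mulr_natr.
Qed.

From mathcomp Require Import ring.

Theorem corollary4 (n : nat) (e : rel 'I_n) :
  (2 <= n)%N ->
  simple_graph e ->
  connected_graph e ->
  (forall i j : 'I_n, (i <= j)%N -> avgdeg e j <= avgdeg e i) ->
  forall i : 'I_n,
    let bound :=
      (avgdeg e i - maxratio e
       + sqrtC ((avgdeg e i + maxratio e) ^+ 2
                + 4%:R * maxratio e
                  * \sum_(k : 'I_n | (k < i)%N) (avgdeg e k - avgdeg e i))) / 2%:R in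
    spectral_radius (adjmx e) <= bound /\
    (spectral_radius (adjmx e) = bound <-> pseudo_regular e).
Proof.
move=> n2 [se irr] conn mord i l0.
pose d k : algC := (deg e k)%:R.
have dpos k : 0 < d k by rewrite ltr0n deg_pos.
have dge1 k : 1 <= d k by rewrite ler1n deg_pos.
set m := avgdeg e.
have dm k : d k * m k = \sum_(j | e k j) d j.
  by rewrite /m /avgdeg /d mulrC divfK // gt_eqF // ltr0n deg_pos.
set N := maxratio e.
have [N0 Nge _] := bigmaxC _ (index_enum ('I_n * 'I_n)%type)
    (fun p => e p.1 p.2) (fun p => d p.2 / d p.1)
    (fun p _ => divr_ge0 (ler0n _ _) (ler0n _ _)).
have Nle k j : e k j -> d j <= N * d k.
  move=> ekj; have := Nge (k, j) (mem_index_enum _) ekj.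
  by rewrite -/N /= ler_pdivrMr.
have snc k c : \sum_(j | e k j) c = c * d k := sum_nbr_const _ e k c.
have mge1 k : 1 <= m k.
  rewrite -(ler_pM2l (dpos k)) mulr1 dm -[d k]mul1r -snc.
  by apply: ler_sum => j _.
have mreal k : m k \is Num.real by apply: ger0_real; apply: le_trans (mge1 k).
set S := \sum_(k < n | (k < i)%N) (m k - m i).
have l0E : l0 = (m i - N + sqrtC ((m i + N)^+2 + 4%:R * N * S)) / 2%:R by [].
have S0 : 0 <= S.
  by apply: sumr_ge0 => k ki; rewrite subr_ge0; apply: mord; apply: ltnW.
have mN0 : 0 <= m i + N by rewrite addr_ge0 // (le_trans _ (mge1 i)).
have sq_ge : m i + N <= sqrtC ((m i + N)^+2 + 4%:R * N * S).
  rewrite -{1}(sqrCK mN0) ler_sqrtC ?nnegrE ?sqr_ge0 ?lerDl ?mulr_ge0 //.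
  by rewrite addr_ge0 ?sqr_ge0 // ?mulr_ge0.
have l0ge : m i <= l0.
  rewrite l0E ler_pdivlMr ?ltr0n // -subr_ge0.
  move: sq_ge; set s := sqrtC _ => sq_ge.
  have -> : m i - N + s - m i * 2%:R = s - (m i + N) by ring.
  by rewrite subr_ge0.
have l0id : (l0 - m i) * (l0 + N) = N * S.
  rewrite l0E; have := sqrtCK ((m i + N)^+2 + 4%:R * N * S).
  set s := sqrtC _ => hs.
  have -> : ((m i - N + s) / 2%:R - m i) * ((m i - N + s) / 2%:R + N) =
            (s ^+ 2 - (m i + N) ^+ 2) / 4%:R.
    by field; rewrite ?pnatr_eq0.
  by rewrite hs; field; rewrite ?pnatr_eq0.
have lpos : 0 < l0 + N.
  by rewrite (lt_le_trans (ltr01)) // (le_trans (mge1 i)) // (le_trans l0ge) // lerDl.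
pose h (k : 'I_n) := if (k < i)%N then (m k - m i) / (l0 + N) else 0.
have h0 k : 0 <= h k.
  rewrite /h; case: ifP => // ki; apply: divr_ge0; last exact: ltW; rewrite subr_ge0.
  by apply: mord; apply: ltnW.
pose H := \sum_k h k.
have NH : N * H = l0 - m i.
  have -> : H = S / (l0 + N).
    rewrite /H /S mulr_suml [RHS]big_mkcond /=; apply: eq_bigr => k _; rewrite /h; case: ifP => //; rewrite mul0r.
  by rewrite mulrA -l0id mulfK // gt_eqF.
pose w (k : 'I_n) := d k * (1 + h k).
have wpos k : 0 < w k by rewrite mulr_gt0 // (lt_le_trans ltr01) // lerDl.
have R0 k : \sum_(j | e k j) w j = d k * m k + \sum_(j | e k j) d j * h j.
  by rewrite dm -big_split; apply: eq_bigr => j _; rewrite /w mulrDr mulr1.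
have R1 k : \sum_(j | e k j) d j * h j <= N * d k * \sum_(j | e k j) h j.
  rewrite mulr_sumr; apply: ler_sum => j ekj; apply: ler_wpM2r => //.
  by rewrite mulrC -(mulrC N) Nle.
have R2 k : H - h k = \sum_(j | e k j) h j + \sum_(j | (j != k) && ~~ e k j) h j.
  rewrite /H (bigD1 k) //= addrC addrK (bigID (fun j => e k j)) /=.
  congr (_ + _); apply: eq_bigl => j; case ekj: (e k j); rewrite ?andbT ?andbF //.
  by apply/eqP => jk; rewrite jk irr in ekj.
have R3 k : d k * m k + N * d k * (H - h k) <= l0 * w k.
  have key : m k - m i <= (l0 + N) * h k.
    rewrite /h; case: ifP => ki; first by rewrite mulrC divfK // gt_eqF.
    rewrite mulr0 subr_le0; apply: mord; by rewrite leqNgt ki.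
  rewrite -subr_ge0.
  have -> : l0 * w k - (d k * m k + N * d k * (H - h k)) =
     d k * ((l0 + N) * h k - (m k - m i)) + d k * (l0 - m i - N * H).
    by rewrite /w; ring.
  by rewrite NH subrr mulr0 addr0 mulr_ge0 ?subr_ge0 // ltW.
have rowb k : \sum_(j | e k j) w j <= l0 * w k.
  rewrite R0 (le_trans _ (R3 k)) // lerD2l (le_trans (R1 k)) //.
  apply: ler_wpM2l; first by rewrite mulr_ge0 // ltW.
  rewrite R2 lerDl.
  by apply: sumr_ge0 => j _.
set A := adjmx e.
have eigb l : l \in spectrum A -> `|l| <= l0.
  move=> /spec_eig [v ev vnz].
  by have [] := eig_weight _ e w l0 l v se wpos rowb ev vnz.
have [rho0 rhoge rhoex] :=
  bigmaxC _ (spectrum A) predT (fun l => `|l|) (fun _ _ => normr_ge0 _).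
have rhoE : spectral_radius A = \big[Num.max/0]_(x <- spectrum A | predT x) `|x| by [].
have l0pos : 0 < l0 by rewrite (lt_le_trans ltr01) // (le_trans (mge1 i)).
have part1 : spectral_radius A <= l0.
  rewrite rhoE; case: rhoex => [->|[l ls [_ <-]]]; first exact: ltW.
  exact: eigb.
split => //; split.
- move=> rhol0.
  have [l ls ll0] : exists2 l, l \in spectrum A & `|l| = l0.
    move: rhol0; rewrite rhoE; case: rhoex => [->|[l ls [_ <-]]].
      by move=> hh; move: l0pos; rewrite -hh ltxx.
    by move=> hh; exists l.
  have [v ev vnz] := spec_eig _ _ _ ls.
  have [_ tight] := eig_weight _ e w l0 l v se wpos rowb ev vnz.
  have tall := tight ll0 conn.
  case: (boolP [forall j, h j == 0]) => [/forallP allz | ].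
    have mk k : m k = l0.
      have := tall k; rewrite R0.
      have -> : \sum_(j | e k j) d j * h j = 0.
        by apply: big1 => j _; rewrite (eqP (allz j)) mulr0.
      rewrite /w (eqP (allz k)) addr0 addr0 mulr1 mulrC.
      by move/(mulIf (negbT (gt_eqF (dpos k)))).
    by move=> a b; rewrite /m in mk; rewrite !mk.
  rewrite negb_forall => /existsP [j0 hj0].
  exfalso.
  have hj0p : 0 < h j0 by rewrite lt_def hj0 h0.
  have j0i : (j0 < i)%N.
    by move: hj0; rewrite /h; case: ifP => //; rewrite eqxx.
  have ij0 : i != j0 by apply/eqP => ij; rewrite ij ltnn in j0i.
  have [jn ejn] : exists j, e i j.
    by have := deg_pos _ e n2 conn i; rewrite /deg card_gt0 => /set0Pn [j]; rewrite inE; exists j.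
  have Npos : 0 < N.
    have := Nle i jn ejn; have := dpos jn => dj dle.
    have : 0 < N * d i by apply: lt_le_trans dle.
    by rewrite pmulr_lgt0.
  have adj k : k != j0 -> e k j0 /\ d j0 = N * d k.
    move=> kj0.
    have Nd : 0 < N * d k by rewrite mulr_gt0.
    set X := \sum_(j | e k j) d j * h j.
    set Y := N * d k * \sum_(j | e k j) h j.
    set Z := N * d k * (H - h k).
    have XY : X <= Y := R1 k.
    have YZ : Y <= Z.
      rewrite /Y /Z R2 mulrDr lerDl; apply: mulr_ge0; first exact: ltW.
      by apply: sumr_ge0 => j _.
    have ZW : d k * m k + Z <= l0 * w k := R3 k.
    have XW : d k * m k + X = l0 * w k by rewrite -R0 tall.
    have eXY : X = Y.
      by apply/le_anti; rewrite XY -(lerD2l (d k * m k)) XW (le_trans _ ZW) // lerD2l.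
    have eYZ : Y = Z.
      by apply/le_anti; rewrite YZ -(lerD2l (d k * m k)) -eXY XW.
    have ek0 : e k j0.
      apply/negPn/negP => nek.
      move: eYZ; rewrite /Y /Z R2 mulrDr => /eqP; rewrite -subr_eq0 opprD addrA subrr add0r oppr_eq0.
      rewrite mulf_eq0 (gt_eqF Nd) /= => /eqP hz.
      have nn : forall j, (j != k) && ~~ e k j -> 0 <= h j by [].
      have := psumr_eq0P nn hz (i := j0); rewrite eq_sym kj0 nek => /(_ isT) hz0.
      by move: hj0; rewrite hz0 eqxx.
    have : \sum_(j | e k j) (N * d k * h j - d j * h j) = 0.
      by rewrite sumrB -mulr_sumr -/Y -/X eXY subrr.
    have nn : forall j, e k j -> 0 <= N * d k * h j - d j * h j.
      by move=> j ekj; rewrite -mulrBl mulr_ge0 // subr_ge0 Nle.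
    move/(psumr_eq0P nn) => /(_ j0 ek0) /eqP.
    rewrite -mulrBl mulf_eq0 (gt_eqF hj0p) orbF subr_eq0 => /eqP.
    by move=> ->; split.
  have [ei0 dj0] := adj i ij0.
  have dall k : k != j0 -> d k = d i.
    move=> kj0; have [_ dk] := adj k kj0.
    by apply: (mulfI (negbT (gt_eqF Npos))); rewrite -dk.
  have mj0 : m j0 = d i.
    apply: (mulfI (negbT (gt_eqF (dpos j0)))); rewrite dm mulrC -snc.
    apply: eq_bigr => k ek; apply: dall.
    by apply/eqP => kj; rewrite kj irr in ek.
  have N1 : 1 <= N.
    have := Nle j0 i (eqbRL (se _ _) ei0); rewrite dj0 mulrA -{1}[d i]mul1r.
    rewrite ler_pM2r // => h1.
    rewrite real_leNgt ?realE ?ler01 ?(ltW Npos) //; apply/negP => N1.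
    have : N * N < 1.
      apply: (le_lt_trans (y := N)) => //; rewrite -[X in _ <= X]mulr1; apply: ler_wpM2l; [exact: ltW Npos | exact: ltW N1].
    by move=> h2; have := lt_le_trans h2 h1; rewrite ltxx.
  have mi : d i * m i = d i * d i + (N - 1) * d i.
    rewrite dm -[d i * d i]snc (bigD1 j0) //= [X in _ = X + _](bigD1 j0) //=.
    rewrite (eq_bigr (fun _ => d i)); last by move=> j /andP [_ jj0]; rewrite dall.
    by rewrite dj0; ring.
  have mige : m j0 <= m i.
    rewrite mj0 -(ler_pM2l (dpos i)) mi lerDl mulr_ge0 ?subr_ge0 // ltW.
  move: hj0p; rewrite /h j0i; rewrite lt_def => /andP [_].
  rewrite pmulr_lge0 ?invr_gt0 // subr_ge0 => hle.
  have : m j0 = m i by apply/le_anti; rewrite mige hle.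
  move=> eqm; move: hj0; rewrite /h j0i eqm subrr mul0r eqxx //.
- move=> pr.
  have S00 : S = 0 by apply: big1 => k _; rewrite /m (pr k i) subrr.
  have l0mi : l0 = m i.
    rewrite l0E S00 mulr0 addr0 sqrCK //.
    by field; rewrite ?pnatr_eq0.
  pose v : 'rV[algC]_n := \row_k d k.
  have ev : v *m A = m i *: v.
    apply/rowP => k; rewrite adj_entry // !mxE.
    rewrite (eq_bigr (fun j => d j)); last by move=> j _; rewrite mxE.
    by rewrite -dm /m (pr k i) mulrC.
  have vnz : v != 0.
    by apply/negP => /eqP/rowP/(_ i); rewrite !mxE => /eqP; rewrite gt_eqF.
  have ms := eig_spec _ _ _ _ ev vnz.
  apply/le_anti; rewrite part1 /= l0mi.
  rewrite -{1}(ger0_norm (le_trans ler01 (mge1 i))) rhoE.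
  exact: rhoge.
Qed.
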